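(* Let $R$ be a hyperdomain, $K=\operatorname{Frac}(R)$, $X=\operatorname{Spec}R$, and $\mathcal{O}_X$ the structure sheaf of $X$ with its pointwise multiplication and hyperaddition. Then: (1) For every $0\neq f\in R$, $\mathcal{O}_X(D(f))$ is a hyperring isomorphic to $R_f$; in particular $\mathcal{O}_X(X)=\Gamma(X,\mathcal{O}_X)\cong R$. (2) For every open $U\subseteq X$, $\mathcal{O}_X(U)$ is a hyperring, isomorphic to the sub-hyperring $Y(U):=\{u\in K\mid \text{for every }\mathfrak{p}\in U,\ u=\tfrac ab\text{ for some }a\in R,\ b\notin\mathfrak{p}\}$ of $K$; moreover, identifying each $R_f$ ($f\neq0$) with its image in $K$ under the canonical injection and $\mathcal{O}_X(D(f))$ with $R_f$ via (1), $\mathcal{O}_X(U)\cong\bigcap_{D(f)\subseteq U}\mathcal{O}_X(D(f))$. (3) For every $\mathfrak{p}\in X$, the stalk $\mathcal{O}_{X,\mathfrak{p}}=\varinjlim_{U\ni\mathfrak{p}}\mathcal{O}_X(U)$ exists in the category of hyperrings and is isomorphic to $R_\mathfrak{p}$.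
   Context: A hyperoperation $+:H\times H\to\mathcal{P}^*(H)$ is extended to subsets by $A+B=\bigcup_{a\in A,b\in B}(a+b)$. A (canonical) hypergroup is a nonempty set with a commutative associative hyperoperation, a unique $0$ with $0+x=\{x\}$, unique inverses $-x$ with $0\in x+(-x)$, and reversibility $x\in y+z\iff z\in x+(-y)$. A hyperring $(R,+,\cdot,0,1)$ is a hypergroup $(R,+,0)$ with a commutative monoid $(R,\cdot,1)$ such that $x(y+z)=xy+xz$, $0x=0$, $0\neq1$; homomorphisms satisfy $\varphi(a+b)\subseteq\varphi(a)+\varphi(b)$, $\varphi(ab)=\varphi(a)\varphi(b)$. A hyperdomain is a hyperring in which $xy=0$ implies $x=0$ or $y=0$. Hyperideals, prime hyperideals, $\operatorname{Spec}R$ with the Zariski topology (closed sets $V(I)=\{\mathfrak{p}\supseteq I\}$), and $D(f)=\{\mathfrak{p}\mid f\notin\mathfrak{p}\}$ are as for rings (a hyperideal is a nonempty $I$ with $a-rb\subseteq I$ for $a,b\in I$, $r\in R$). Localization: for a multiplicative submonoid $S\subseteq R$, $S^{-1}R$ is $R\times S$ modulo $(r_1,s_1)\sim(r_2,s_2)\iff xr_1s_2=xr_2s_1$ for some $x\in S$; with $\frac{r_1}{s_1}+\frac{r_2}{s_2}=\{\frac{y}{s_1s_2}\mid y\in r_1s_2+s_1r_2\}$ and $\frac{r_1}{s_1}\cdot\frac{r_2}{s_2}=\frac{r_1r_2}{s_1s_2}$. $R_\mathfrak{p}=(R\setminus\mathfrak{p})^{-1}R$, $R_f=\{1,f,f^2,\dots\}^{-1}R$,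 $K=\operatorname{Frac}(R)=(R\setminus\{0\})^{-1}R$. For open $U\subseteq X$, $\mathcal{O}_X(U)$ is the set of maps $s:U\to\bigsqcup_{\mathfrak{p}\in U}R_\mathfrak{p}$ with $s(\mathfrak{p})\in R_\mathfrak{p}$ such that each $\mathfrak{p}\in U$ has an open neighbourhood $V\subseteq U$ and $a,f\in R$ with $f\notin\mathfrak{q}$ and $s(\mathfrak{q})=\frac af$ in $R_\mathfrak{q}$ for all $\mathfrak{q}\in V$; restrictions are restrictions of maps; $(s\cdot t)(\mathfrak{p})=s(\mathfrak{p})t(\mathfrak{p})$ and $s+t=\{r\in\mathcal{O}_X(U)\mid r(\mathfrak{p})\in s(\mathfrak{p})+t(\mathfrak{p})\ \forall\mathfrak{p}\in U\}$. *)

(* Defs.v *)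
From Stdlib Require Import ClassicalEpsilon.


(** A hyperoperation a + b ⊆ T is encoded as a relation: [hadd a b c] means
    c ∈ a + b.  Structures are "relativised" to a carrier predicate [A : T -> Prop]
    inside an ambient type [T]; the hyperring is the set [A] with the operations
    restricted to it (in particular a+b is read as {c ∈ A | hadd a b c}).
    This is used for R itself (A = everything), localizations (A = equivalence
    classes), sub-hyperrings of K, and O_X(U) (A = sections). *)
Record hops (T : Type) := HOps {
  hadd : T -> T -> T -> Prop;
  hmul : T -> T -> T;
  hzero : T;
  hone : T }.

Arguments HOps {T}.
Arguments hadd {T}.
Arguments hmul {T}.
Arguments hzero {T}.
Arguments hone {T}.

Section Hyperring.
Variables (T : Type) (o : hops T) (A : T -> Prop).
Local Notation "x * y" := (hmul o x y).
Local Notation "0" := (hzero o).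
Local Notation "1" := (hone o).
Local Notation hadd := (hadd o).

Definition is_hyperring : Prop :=
  A 0 /\ A 1 /\ (forall a b, A a -> A b -> A (a * b)) /\
  (forall a b, A a -> A b -> exists c, A c /\ hadd a b c) /\
  (forall a b c, A a -> A b -> A c -> (hadd a b c <-> hadd b a c)) /\
  (forall a b c e, A a -> A b -> A c -> A e ->
     ((exists d, A d /\ hadd a b d /\ hadd d c e) <->
      (exists d, A d /\ hadd b c d /\ hadd a d e))) /\
  (forall x y, A x -> A y -> (hadd 0 x y <-> y = x)) /\
  (forall z, A z -> (forall x y, A x -> A y -> (hadd z x y <-> y = x)) -> z = 0) /\
  (forall x, A x -> exists y, A y /\ hadd x y 0 /\
                    (forall y', A y' -> hadd x y' 0 -> y' = y)) /\
  (forall x y z y', A x -> A y -> A z -> A y' -> hadd y y' 0 ->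
     (hadd y z x <-> hadd x y' z)) /\
  (forall a b c, A a -> A b -> A c -> a * (b * c) = (a * b) * c) /\
  (forall a b, A a -> A b -> a * b = b * a) /\
  (forall a, A a -> 1 * a = a) /\
  (forall x y z c, A x -> A y -> A z -> A c ->
     ((exists w, A w /\ hadd y z w /\ c = x * w) <-> hadd (x * y) (x * z) c)) /\
  (forall x, A x -> 0 * x = 0) /\
  0 <> 1.

Definition is_hyperdomain : Prop :=
  is_hyperring /\ (forall x y, A x -> A y -> x * y = 0 -> x = 0 \/ y = 0).

End Hyperring.
Arguments is_hyperring {T}.
Arguments is_hyperdomain {T}.

Definition is_sub_hyperring (T : Type) (o : hops T) (A B : T -> Prop) : Prop :=
  (forall x, B x -> A x) /\ B (hzero o) /\ B (hone o) /\
  (forall a b, B a -> B b -> B (hmul o a b)) /\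
  (forall a b c, B a -> B b -> A c -> hadd o a b c -> B c) /\
  (forall x y, B x -> A y -> hadd o x y (hzero o) -> B y) /\
  is_hyperring o B.

Definition is_hom (T1 : Type) (o1 : hops T1) (A1 : T1 -> Prop)
    (T2 : Type) (o2 : hops T2) (A2 : T2 -> Prop) (phi : T1 -> T2) : Prop :=
  (forall a, A1 a -> A2 (phi a)) /\
  (forall a b c, A1 a -> A1 b -> A1 c -> hadd o1 a b c ->
      hadd o2 (phi a) (phi b) (phi c)) /\
  (forall a b, A1 a -> A1 b -> phi (hmul o1 a b) = hmul o2 (phi a) (phi b)).

Arguments is_hom {T1} o1 A1 {T2}.

Definition hiso (T1 : Type) (o1 : hops T1) (A1 : T1 -> Prop)
    (T2 : Type) (o2 : hops T2) (A2 : T2 -> Prop) : Prop :=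
  exists (phi : T1 -> T2) (psi : T2 -> T1),
    is_hom o1 A1 o2 A2 phi /\ is_hom o2 A2 o1 A1 psi /\
    (forall a, A1 a -> psi (phi a) = a) /\ (forall b, A2 b -> phi (psi b) = b).

Arguments is_sub_hyperring {T}.

Arguments hiso {T1} o1 A1 {T2}.

Definition full (T : Type) : T -> Prop := fun _ => True.

Section Spec.
Variables (R : Type) (o : hops R).
Local Notation "x * y" := (hmul o x y).

(** nonempty I with a - rb ⊆ I for a, b ∈ I (n = -(rb) is the inverse of rb) *)
Definition is_hideal (I : R -> Prop) : Prop :=
  (exists a, I a) /\
  (forall a b r n c, I a -> I b -> hadd o (r * b) n (hzero o) ->
      hadd o a n c -> I c).

Definition is_prime (I : R -> Prop) : Prop :=
  is_hideal I /\ (exists x, ~ I x) /\ (forall a b, I (a * b) -> I a \/ I b).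

Definition spec : Type := { p : R -> Prop | is_prime p }.

Definition Vset (I : R -> Prop) : spec -> Prop :=
  fun p => forall x, I x -> proj1_sig p x.

Definition zopen (U : spec -> Prop) : Prop :=
  exists I, is_hideal I /\ forall p, U p <-> ~ Vset I p.

Definition Dset (f : R) : spec -> Prop := fun p => ~ proj1_sig p f.

(** * Localization S^{-1}R, elements = equivalence classes in R × S,
      represented as subsets of R * R. *)
Section Loc.
Variable S : R -> Prop.

Definition frel (p q : R * R) : Prop :=
  exists x, S x /\ x * fst p * snd q = x * fst q * snd p.

Definition cls (r s : R) : R * R -> Prop :=
  fun q => S (snd q) /\ frel (r, s) q.

Definition is_frac (C : R * R -> Prop) : Prop :=
  exists r s, S s /\ C = cls r s.

Definition rep (C : R * R -> Prop) : R * R :=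
  epsilon (inhabits (hzero o, hone o)) C.

Definition loc_ops : hops (R * R -> Prop) := HOps
  (fun C1 C2 C3 => exists r1 s1 r2 s2 y,
      C1 (r1, s1) /\ C2 (r2, s2) /\ hadd o (r1 * s2) (s1 * r2) y /\
      C3 = cls y (s1 * s2))
  (fun C1 C2 => cls (fst (rep C1) * fst (rep C2)) (snd (rep C1) * snd (rep C2)))
  (cls (hzero o) (hone o))
  (cls (hone o) (hone o)).
End Loc.

Fixpoint hpow (f : R) (n : nat) : R :=
  match n with O => hone o | Datatypes.S m => f * hpow f m end.

Definition Sprime (p : spec) : R -> Prop := fun x => ~ proj1_sig p x.
Definition Spow (f : R) : R -> Prop := fun x => exists n, x = hpow f n.
Definition Snz : R -> Prop := fun x => x <> hzero o.

(** R_f inside K = Frac R: the image {a / f^n} of the canonical injection. *)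
Definition image_Rf (f : R) : (R * R -> Prop) -> Prop :=
  fun u => is_frac Snz u /\ exists a n, u (a, hpow f n).

Definition Yset (U : spec -> Prop) : (R * R -> Prop) -> Prop :=
  fun u => is_frac Snz u /\
    forall p : spec, U p -> exists a b, ~ proj1_sig p b /\ u = cls Snz a b.

Definition Inter_Rf (U : spec -> Prop) : (R * R -> Prop) -> Prop :=
  fun u => is_frac Snz u /\
    forall f, f <> hzero o -> (forall p, Dset f p -> U p) -> image_Rf f u.

(** * The structure sheaf. Sections over U are maps on {p ∈ U} with
      s(p) ∈ R_p. *)
Definition secT (U : spec -> Prop) : Type := { p : spec | U p } -> (R * R -> Prop).

Definition is_section (U : spec -> Prop) (s : secT U) : Prop :=
  (forall q, is_frac (Sprime (proj1_sig q)) (s q)) /\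
  (forall q : { p : spec | U p }, exists V, zopen V /\ V (proj1_sig q) /\
      (forall p, V p -> U p) /\
      exists a f, forall q' : { p : spec | U p }, V (proj1_sig q') ->
        ~ proj1_sig (proj1_sig q') f /\
        s q' = cls (Sprime (proj1_sig q')) a f).

Definition sec_ops (U : spec -> Prop) : hops (secT U) := HOps
  (fun s t r => forall q, hadd (loc_ops (Sprime (proj1_sig q))) (s q) (t q) (r q))
  (fun s t => fun q => hmul (loc_ops (Sprime (proj1_sig q))) (s q) (t q))
  (fun q => hzero (loc_ops (Sprime (proj1_sig q))))
  (fun q => hone (loc_ops (Sprime (proj1_sig q)))).

Definition restr (U V : spec -> Prop) (HVU : forall p, V p -> U p) (s : secT U)
  : secT V := fun q => s (exist _ (proj1_sig q) (HVU _ (proj2_sig q))).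

Section Stalk.
Variable p : spec.
Definition nbhd (U : spec -> Prop) : Prop := zopen U /\ U p.

Definition is_cocone (T : Type) (oT : hops T) (AT : T -> Prop)
    (phi : forall U, secT U -> T) : Prop :=
  (forall U, nbhd U -> is_hom (sec_ops U) (is_section U) oT AT (phi U)) /\
  (forall U V (HVU : forall q, V q -> U q), nbhd U -> nbhd V ->
     forall s, is_section U s -> phi U s = phi V (restr U V HVU s)).

Definition factors (T : Type) (phi : forall U, secT U -> T)
    (T' : Type) (psi : forall U, secT U -> T') (h : T -> T') : Prop :=
  forall U, nbhd U -> forall s, is_section U s -> psi U s = h (phi U s).

Definition is_stalk_colimit (L : Type) (oL : hops L) (AL : L -> Prop)
    (phi : forall U, secT U -> L) : Prop :=
  is_hyperring oL AL /\ is_cocone L oL AL phi /\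
  forall (T' : Type) (oT : hops T') (AT : T' -> Prop) (psi : forall U, secT U -> T'),
    is_hyperring oT AT -> is_cocone T' oT AT psi ->
    (exists h, is_hom oL AL oT AT h /\ factors L phi T' psi h) /\
    (forall h1 h2, is_hom oL AL oT AT h1 -> is_hom oL AL oT AT h2 ->
       factors L phi T' psi h1 -> factors L phi T' psi h2 ->
       forall x, AL x -> h1 x = h2 x).
End Stalk.
End Spec.
Arguments is_hideal {R} o.
Arguments is_prime {R} o.
Arguments spec {R} o.
Arguments Vset {R} o.
Arguments zopen {R} o.
Arguments Dset {R} o.
Arguments frel {R} o.
Arguments cls {R} o.
Arguments is_frac {R} o.
Arguments rep {R} o.
Arguments loc_ops {R} o.
Arguments hpow {R} o.
Arguments Sprime {R} o.
Arguments Spow {R} o.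
Arguments Snz {R} o.
Arguments image_Rf {R} o.
Arguments Yset {R} o.
Arguments Inter_Rf {R} o.
Arguments secT {R} o.
Arguments is_section {R} o.
Arguments sec_ops {R} o.
Arguments restr {R} o.
Arguments nbhd {R} o.
Arguments is_cocone {R} o.
Arguments factors {R} o.
Arguments is_stalk_colimit {R} o p {L}.

(* Main.v *)
Require Import Defs.
From mathcomp Require classical_sets.
From Stdlib Require Import ClassicalEpsilon Classical FunctionalExtensionality PropExtensionality List Permutation Sorting.Permutation Arith.

Section MonoidNorm.
Variables (T:Type) (mul: T->T->T) (one:T).
Hypothesis mA : forall a b c, mul a (mul b c) = mul (mul a b) c.
Hypothesis mC : forall a b, mul a b = mul b a.
Hypothesis m1 : forall a, mul one a = a.
Inductive mexp := MAt (n:nat) | MMul (a b: mexp) | MOne.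
Fixpoint mden (env : list T) e := match e with MAt n => nth n env one | MMul a b => mul (mden env a) (mden env b) | MOne => one end.
Fixpoint mflat e := match e with MAt n => n :: nil | MMul a b => mflat a ++ mflat b | MOne => nil end.
Definition lden env (l : list nat) := fold_right (fun n acc => mul (nth n env one) acc) one l.
Lemma lden_app env l1 l2 : lden env (l1 ++ l2) = mul (lden env l1) (lden env l2).
Proof. induction l1; simpl. rewrite m1; auto. rewrite IHl1, mA; auto. Qed.
Lemma mden_flat env e : mden env e = lden env (mflat e).
Proof. induction e; simpl. rewrite mC, m1; auto. rewrite lden_app, IHe1, IHe2; auto. auto. Qed.
Lemma lden_perm env l1 l2 : Permutation l1 l2 -> lden env l1 = lden env l2.
Proof. induction 1; simpl; auto. rewrite IHPermutation; auto. rewrite !mA, (mC (nth y env one)); auto. congruence. Qed.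
Fixpoint ins (n:nat) l := match l with nil => n :: nil | m :: r => if Nat.leb n m then n :: m :: r else m :: ins n r end.
Fixpoint isort l := match l with nil => nil | n :: r => ins n (isort r) end.
Lemma ins_perm n l : Permutation (n :: l) (ins n l).
Proof. induction l; simpl; auto. destruct (Nat.leb n a); auto. eapply perm_trans. apply perm_swap. auto. Qed.
Lemma isort_perm l : Permutation l (isort l).
Proof. induction l; simpl; auto. eapply perm_trans. apply perm_skip, IHl. apply ins_perm. Qed.
Lemma mnorm_ok env e1 e2 : isort (mflat e1) = isort (mflat e2) -> mden env e1 = mden env e2.
Proof. intro h. rewrite !mden_flat. rewrite (lden_perm env _ _ (isort_perm (mflat e1))), h.
 symmetry; apply lden_perm, isort_perm. Qed.
End MonoidNorm.

Section Transport.
Variables (T1 : Type) (p1 : hops T1) (A1 : T1 -> Prop) (T2 : Type) (p2 : hops T2) (A2 : T2 -> Prop).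
Variables (phi : T1 -> T2) (psi : T2 -> T1).
Hypothesis H2 : is_hyperring p2 A2.
Hypothesis Hphi : forall a, A1 a -> A2 (phi a).
Hypothesis Hpsi : forall b, A2 b -> A1 (psi b).
Hypothesis Hpp : forall a, A1 a -> psi (phi a) = a.
Hypothesis Hqq : forall b, A2 b -> phi (psi b) = b.
Hypothesis Hadd : forall a b c, A1 a -> A1 b -> A1 c -> (hadd p1 a b c <-> hadd p2 (phi a) (phi b) (phi c)).
Hypothesis Hmul : forall a b, A1 a -> A1 b -> phi (hmul p1 a b) = hmul p2 (phi a) (phi b).
Hypothesis Hmc : forall a b, A1 a -> A1 b -> A1 (hmul p1 a b).
Hypothesis H0 : A1 (hzero p1).
Hypothesis H1 : A1 (hone p1).
Hypothesis Hz : phi (hzero p1) = hzero p2.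
Hypothesis Ho : phi (hone p1) = hone p2.

Let inj a b : A1 a -> A1 b -> phi a = phi b -> a = b.
Proof. intros ha hb e. rewrite <- (Hpp a), <- (Hpp b), e; auto. Qed.

Lemma transport : is_hyperring p1 A1.
Proof.
 destruct H2 as [G0 [G1 [Gmc [Gex [Gcomm [Gass [Gz [Gzu [Ginv [Grev [GmA [GmC [Gm1 [Gdist [Gm0 G01]]]]]]]]]]]]]]].
 split; auto. split; auto. split; auto.
 split. { intros a b ha hb. destruct (Gex _ _ (Hphi a ha) (Hphi b hb)) as [c [hc h]].
   exists (psi c). split; auto. apply Hadd; auto. rewrite Hqq; auto. }
 split. { intros a b c ha hb hc. rewrite !Hadd by auto. apply Gcomm; auto. }
 split. { intros a b c e ha hb hc he. split.
   - intros [d [hd [h1 h2]]]. apply Hadd in h1; auto. apply Hadd in h2; auto.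
     destruct (proj1 (Gass _ _ _ _ (Hphi a ha) (Hphi b hb) (Hphi c hc) (Hphi e he))) as [d2 [hd2 [h3 h4]]].
     exists (phi d); repeat split; auto.
     exists (psi d2). split; auto. rewrite !Hadd, Hqq; auto.
   - intros [d [hd [h1 h2]]]. apply Hadd in h1; auto. apply Hadd in h2; auto.
     destruct (proj2 (Gass _ _ _ _ (Hphi a ha) (Hphi b hb) (Hphi c hc) (Hphi e he))) as [d2 [hd2 [h3 h4]]].
     exists (phi d); repeat split; auto.
     exists (psi d2). split; auto. rewrite !Hadd, Hqq; auto. }
 split. { intros x y hx hy. rewrite Hadd, Hz by auto. rewrite Gz; auto. split. apply inj; auto. intros ->; auto. }
 split. { intros z hz hP. apply inj; auto. rewrite Hz. apply Gzu; auto.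
   intros x y hx hy. rewrite <- (Hqq x), <- (Hqq y) by auto. rewrite <- Hadd by auto. rewrite hP by auto.
   split. intros ->; auto. intro e; rewrite <- (Hqq x), <- (Hqq y), e; auto. }
 split. { intros x hx. destruct (Ginv _ (Hphi x hx)) as [y [hy [h hu]]]. exists (psi y). split; auto.
   split. apply Hadd; auto. rewrite Hqq, Hz; auto.
   intros y' hy' h'. apply inj; auto. rewrite Hqq; auto. apply hu; auto. rewrite <- Hz. apply Hadd; auto. }
 split. { intros x y z y' hx hy hz hy' hn. rewrite !Hadd by auto. apply Grev; auto. rewrite <- Hz. apply Hadd; auto. }
 split. { intros a b c ha hb hc. apply inj; auto. rewrite !Hmul; auto. }
 split. { intros a b ha hb. apply inj; auto. rewrite !Hmul; auto. }
 split. { intros a ha. apply inj; auto. rewrite Hmul, Ho; auto. }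
 split. { intros x y z c hx hy hz hc. rewrite Hadd by auto. rewrite !Hmul by auto. rewrite <- Gdist; auto.
   split.
   - intros [w [hw [h ->]]]. exists (phi w). split; auto. split. apply Hadd; auto. auto.
   - intros [w [hw [h e]]]. exists (psi w). split; auto. split. apply Hadd; auto. rewrite Hqq; auto.
     apply inj; auto. rewrite Hmul, Hqq; auto. }
 split. { intros x hx. apply inj; auto. rewrite Hmul, Hz; auto. }
 { intro e. apply G01. rewrite <- Hz, <- Ho, e; auto. }
Qed.
End Transport.

Lemma hom_comp T1 (p1 : hops T1) A1 T2 (p2 : hops T2) A2 T3 (p3 : hops T3) A3 f g :
  is_hom p1 A1 p2 A2 f -> is_hom p2 A2 p3 A3 g -> is_hom p1 A1 p3 A3 (fun x => g (f x)).
Proof. intros [f1 [f2 f3]] [g1 [g2 g3]]. split; auto. split; auto. intros; rewrite f3, g3; auto. Qed.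

Lemma hiso_trans T1 (p1 : hops T1) A1 T2 (p2 : hops T2) A2 T3 (p3 : hops T3) A3 :
  hiso p1 A1 p2 A2 -> hiso p2 A2 p3 A3 -> hiso p1 A1 p3 A3.
Proof. intros [f [f' [hf [hf' [e1 e2]]]]] [g [g' [hg [hg' [e3 e4]]]]].
 exists (fun x => g (f x)), (fun x => f' (g' x)). split. eapply hom_comp; eauto. split. eapply hom_comp; eauto.
 split. intros a ha. rewrite e3; auto. apply hf; auto. intros b hb. rewrite e2; auto. apply hg'; auto. Qed.

Section Alg.
Variables (R : Type) (o : hops R).
Hypothesis HD : is_hyperdomain o (full R).

Local Notation "x * y" := (hmul o x y).
Local Notation z0 := (hzero o).
Local Notation o1 := (hone o).
Local Notation add := (hadd o).

Lemma HDparts : True. Proof. exact I. Qed.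

Ltac dd := destruct HD as [[H0 [H1 [Hmc [Hex [Hcomm [Hass [Hz [Hzu [Hinv [Hrev [HmA [HmC [Hm1 [Hdist [Hm0 H01]]]]]]]]]]]]]]] Hdom].

Lemma addC a b c : add a b c -> add b a c.
Proof. dd. intro; apply Hcomm; try exact I; auto. Qed.
Lemma add0l x y : add z0 x y <-> y = x.
Proof. dd. apply Hz; exact I. Qed.
Lemma add0r x y : add x z0 y <-> y = x.
Proof. split; intro H. apply add0l. apply addC; auto. apply addC. apply add0l; auto. Qed.
Lemma add_ex a b : exists c, add a b c.
Proof. dd. destruct (Hex a b I I) as [c [_ Hc]]; eauto. Qed.
Lemma add_assoc a b c e : (exists d, add a b d /\ add d c e) <-> (exists d, add b c d /\ add a d e).
Proof. dd. destruct (Hass a b c e I I I I) as [X Y]; split; intros [d [h1 h2]].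
 - destruct X as [d' [_ [? ?]]]; [exists d; repeat split; auto; exact I|]; eauto.
 - destruct Y as [d' [_ [? ?]]]; [exists d; repeat split; auto; exact I|]; eauto. Qed.
Lemma mA a b c : a * (b * c) = (a * b) * c. Proof. dd. apply HmA; exact I. Qed.
Lemma mC a b : a * b = b * a. Proof. dd. apply HmC; exact I. Qed.
Lemma m1 a : o1 * a = a. Proof. dd. apply Hm1; exact I. Qed.
Lemma m1r a : a * o1 = a. Proof. rewrite mC; apply m1. Qed.
Lemma m0 a : z0 * a = z0. Proof. dd. apply Hm0; exact I. Qed.
Lemma m0r a : a * z0 = z0. Proof. rewrite mC; apply m0. Qed.
Lemma n01 : z0 <> o1. Proof. dd. auto. Qed.
Lemma dom x y : x * y = z0 -> x = z0 \/ y = z0. Proof. dd. apply Hdom; exact I. Qed.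
Lemma mnz x y : x <> z0 -> y <> z0 -> x * y <> z0.
Proof. intros a b c; destruct (dom _ _ c); auto. Qed.
Lemma distr x y z c : (exists w, add y z w /\ c = x * w) <-> add (x * y) (x * z) c.
Proof. dd. destruct (Hdist x y z c I I I I) as [X Y]; split.
 - intros [w [h1 h2]]; apply X; exists w; repeat split; auto.
 - intro h; destruct (Y h) as [w [_ ?]]; eauto. Qed.
Lemma distr1 x y z w : add y z w -> add (x * y) (x * z) (x * w).
Proof. intro; apply distr; eauto. Qed.

Definition neg (x : R) : R := epsilon (inhabits z0) (fun y => add x y z0).
Lemma negP x : add x (neg x) z0.
Proof. dd. unfold neg. apply epsilon_spec. destruct (Hinv x I) as [y [_ [h _]]]; eauto. Qed.
Lemma neg_uniq x y : add x y z0 -> y = neg x.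
Proof. dd. intro h. destruct (Hinv x I) as [y0 [_ [h0 hu]]].
 rewrite (hu y I h), (hu (neg x) I (negP x)); auto. Qed.
Lemma neg_neg x : neg (neg x) = x.
Proof. symmetry; apply neg_uniq. apply addC, negP. Qed.
Lemma mul_neg x y : x * neg y = neg (x * y).
Proof. apply neg_uniq. rewrite <- (m0r x). apply distr1, negP. Qed.
Lemma neg_mul x y : neg x * y = neg (x * y).
Proof. rewrite mC, mul_neg, mC; auto. Qed.
Lemma rev x y z : add y z x <-> add x (neg y) z.
Proof. dd. apply Hrev; try exact I. apply negP. Qed.
Lemma cancel x a b : x <> z0 -> x * a = x * b -> a = b.
Proof. intros hx h. assert (add (x * a) (x * neg b) z0).
 { rewrite h, mul_neg; apply negP. }
 apply distr in H. destruct H as [w [h1 h2]]. symmetry in h2. destruct (dom _ _ h2) as [e|e]; [contradiction|subst].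
 assert (a = neg (neg b)) by (apply neg_uniq; apply addC; auto). rewrite neg_neg in H; auto. Qed.

Ltac inl x l := lazymatch l with | nil => constr:(false) | cons x _ => constr:(true) | cons _ ?r => inl x r end.
Ltac atoms e l := lazymatch e with
 | hmul o ?a ?b => let l1 := atoms a l in atoms b l1
 | hone o => l
 | _ => let b := inl e l in lazymatch b with true => l | false => constr:(cons e l) end end.
Ltac idx x l := lazymatch l with cons x _ => constr:(O) | cons _ ?r => let n := idx x r in constr:(S n) end.
Ltac reif e env := lazymatch e with hmul o ?a ?b => let ra := reif a env in let rb := reif b env in constr:(MMul ra rb) | hone o => constr:(MOne) | _ => let n := idx e env in constr:(MAt n) end.
Ltac msolve := lazymatch goal with |- ?a = ?b =>
 let l := atoms a (@nil R) in let l := atoms b l in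
 let ra := reif a l in let rb := reif b l in
 change (mden _ (hmul o) (hone o) l ra = mden _ (hmul o) (hone o) l rb);
 apply (mnorm_ok _ _ _ mA mC m1); reflexivity end.

Ltac addm h := match goal with |- add ?x ?y ?z => match type of h with add ?x' ?y' ?z' =>
  replace x with x' by msolve; replace y with y' by msolve; replace z with z' by msolve; exact h end end.
Lemma test a b c d : a * (b * (o1 * c)) * d = d * c * (b * a).
Proof. msolve. Qed.

Definition goodS (S : R -> Prop) := S o1 /\ (forall a b, S a -> S b -> S (a*b)) /\ (forall a, S a -> a <> z0).

Section Loc.
Variable S : R -> Prop.
Hypothesis HS : goodS S.
Let S1 : S o1. Proof. apply HS. Qed.
Let SM a b : S a -> S b -> S (a*b). Proof. apply HS. Qed.
Let Snz' a : S a -> a <> z0. Proof. apply HS. Qed.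

Lemma cls_mem a b r s : S b -> (cls o S a b (r,s) <-> S s /\ a * s = r * b).
Proof. intro hb. unfold cls, frel; simpl. split.
 - intros [hs [x [hx e]]]. split; auto. apply (cancel x); auto. rewrite !mA; auto.
 - intros [hs e]. split; auto. exists o1; split; auto. rewrite !m1; auto. Qed.

Lemma cls_self a b : S b -> cls o S a b (a, b).
Proof. intro. apply cls_mem; auto. Qed.

Lemma cls_eq a b c d : S b -> S d -> (cls o S a b = cls o S c d <-> a*d = c*b).
Proof. intros hb hd. split.
 - intro e. assert (h := cls_self c d hd). rewrite <- e in h. apply cls_mem in h; tauto.
 - intro e. apply functional_extensionality; intros [r s]. apply propositional_extensionality.
   rewrite (cls_mem _ _ _ _ hb), (cls_mem _ _ _ _ hd). split; intros [hs e']; split; auto.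
   + apply (cancel b); auto. transitivity ((a * d) * s). rewrite e; msolve.
     transitivity (d * (a * s)). msolve. rewrite e'. msolve.
   + apply (cancel d); auto. transitivity ((c * b) * s). rewrite <- e; msolve.
     transitivity (b * (c * s)). msolve. rewrite e'. msolve. Qed.

Lemma cls_in a b r s : S b -> cls o S a b (r, s) -> cls o S a b = cls o S r s.
Proof. intros hb h. apply cls_mem in h; auto. destruct h as [hs e]. apply cls_eq; auto. Qed.

Lemma frac_rep C : is_frac o S C -> C (rep o C).
Proof. intros [a [b [hb ->]]]. unfold rep. apply epsilon_spec. exists (a,b). apply cls_self; auto. Qed.

Lemma frac_rep_eq C : is_frac o S C -> C = cls o S (fst (rep o C)) (snd (rep o C)) /\ S (snd (rep o C)).
Proof. intro h. assert (hr := frac_rep C h). destruct h as [a [b [hb ->]]].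
 destruct (rep o (cls o S a b)) as [r s] eqn:E. simpl. split. apply cls_in; auto. apply cls_mem in hr; tauto. Qed.

Lemma mul_cls a b c d : S b -> S d ->
  hmul (loc_ops o S) (cls o S a b) (cls o S c d) = cls o S (a*c) (b*d).
Proof. intros hb hd. simpl.
 assert (h1 := frac_rep (cls o S a b) (ex_intro _ a (ex_intro _ b (conj hb eq_refl)))).
 assert (h2 := frac_rep (cls o S c d) (ex_intro _ c (ex_intro _ d (conj hd eq_refl)))).
 destruct (rep o (cls o S a b)) as [a' b']. destruct (rep o (cls o S c d)) as [c' d']. simpl.
 apply cls_mem in h1; auto. apply cls_mem in h2; auto. destruct h1 as [hb' e1]; destruct h2 as [hd' e2].
 apply cls_eq; auto. transitivity ((a' * b) * (c' * d)). msolve. rewrite <- e1, <- e2. msolve. Qed.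

Lemma add_cls a b c d C : S b -> S d ->
  (hadd (loc_ops o S) (cls o S a b) (cls o S c d) C <-> exists y, add (a*d) (b*c) y /\ C = cls o S y (b*d)).
Proof. intros hb hd. simpl. split.
 - intros [r1 [s1 [r2 [s2 [y [h1 [h2 [hy ->]]]]]]]].
   apply cls_mem in h1; auto. apply cls_mem in h2; auto. destruct h1 as [hs1 e1]; destruct h2 as [hs2 e2].
   assert (add ((s1*s2) * (a*d)) ((s1*s2) * (b*c)) ((b*d)*y)).
   { replace ((s1*s2)*(a*d)) with ((b*d)*(r1*s2)) by (transitivity ((a*s1)*(d*s2)); [rewrite e1; msolve|msolve]).
     replace ((s1*s2)*(b*c)) with ((b*d)*(s1*r2)) by (transitivity ((b * s1)*(c*s2)); [rewrite e2; msolve|msolve]).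
     apply distr1; auto. }
   apply distr in H. destruct H as [w [hw e]]. exists w; split; auto.
   apply cls_eq; auto. transitivity ((b*d)*y). msolve. rewrite e; msolve.
 - intros [y [hy ->]]. exists a, b, c, d, y. repeat split; auto; apply cls_self; auto. Qed.

End Loc.

Section LocB.
Variable S : R -> Prop.
Hypothesis HS : goodS S.
Variable B : (R * R -> Prop) -> Prop.
Hypothesis HBf : forall C, B C -> is_frac o S C.
Hypothesis HB0 : B (cls o S z0 o1).
Hypothesis HB1 : B (cls o S o1 o1).
Hypothesis HBm : forall C D, B C -> B D -> B (hmul (loc_ops o S) C D).
Hypothesis HBa : forall C D E, B C -> B D -> is_frac o S E -> hadd (loc_ops o S) C D E -> B E.
Hypothesis HBn : forall C D, B C -> is_frac o S D -> hadd (loc_ops o S) C D (hzero (loc_ops o S)) -> B D.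
Let S1 : S o1. Proof. apply HS. Qed.
Let SM a b : S a -> S b -> S (a*b). Proof. apply HS. Qed.
Let Snz' a : S a -> a <> z0. Proof. apply HS. Qed.
Local Hint Resolve S1 SM : core.

Ltac frc h := let a := fresh "a" in let b := fresh "b" in let hb := fresh "hb" in
  destruct (HBf _ h) as [a [b [hb ->]]].

Lemma isfrac a b : S b -> is_frac o S (cls o S a b).
Proof. intro; exists a, b; auto. Qed.
Local Hint Resolve isfrac : core.

Lemma lcomm X Y Z : B X -> B Y -> (hadd (loc_ops o S) X Y Z <-> hadd (loc_ops o S) Y X Z).
Proof. intros hX hY. frc hX. frc hY. rewrite !add_cls by auto.
 split; intros [y [hy ->]]; exists y; (split; [apply addC; addm hy
   | apply cls_eq; auto; msolve]). Qed.

Lemma lzero X Y : B X -> (hadd (loc_ops o S) (hzero (loc_ops o S)) X Y <-> Y = X).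
Proof. intros hX. frc hX. simpl hzero. rewrite add_cls by auto. split.
 - intros [y [hy ->]]. rewrite m0, m1 in hy. apply add0l in hy. subst. apply cls_eq; auto. msolve.
 - intros ->. exists a. rewrite m0, m1. split. apply add0l; auto. apply cls_eq; auto. msolve. Qed.

Lemma lneg_ex a b : S b -> hadd (loc_ops o S) (cls o S a b) (cls o S (neg a) b) (hzero (loc_ops o S)).
Proof. intro hb. simpl hzero. apply add_cls; auto. exists z0. split.
 rewrite mul_neg, (mC a b). apply negP. apply cls_eq; auto. rewrite !m0; auto. Qed.

Lemma lneg_uniq a b Y : S b -> B Y -> hadd (loc_ops o S) (cls o S a b) Y (hzero (loc_ops o S)) ->
  Y = cls o S (neg a) b.
Proof. intros hb hY. frc hY. simpl hzero. rewrite add_cls by auto. intros [y [hy e]].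
 apply cls_eq in e; auto. rewrite m0, m1r in e. subst y.
 apply neg_uniq in hy. apply cls_eq; auto. rewrite neg_mul, <- hy. msolve. Qed.

Lemma loc_hyperring : is_hyperring (loc_ops o S) B.
Proof.
 split; [auto|]. split; [auto|]. split; [auto|].
 split. { intros X Y hX hY. frc hX. frc hY. destruct (add_ex (a*b0) (b*a0)) as [y hy].
   exists (cls o S y (b*b0)). assert (hadd (loc_ops o S) (cls o S a b) (cls o S a0 b0) (cls o S y (b*b0))).
   { apply add_cls; eauto. } split; [|exact H]. eapply HBa; [exact hX|exact hY|apply isfrac; auto|exact H]. }
 split. { intros; apply lcomm; auto. }
 split. { intros X Y Z E hX hY hZ hE. frc hX. frc hY. frc hZ. split.
   - intros [D [hD [h1 h2]]]. apply add_cls in h1; auto. destruct h1 as [y [hy ->]].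
     apply add_cls in h2; auto. destruct h2 as [z [hz ->]].
     assert (hf := distr1 b1 _ _ _ hy).
     assert (exists w, add (b1*(b*a0)) ((b*b0)*a1) w /\ add (b1*(a*b0)) w z) as [w [hw hz2]].
     { apply add_assoc. exists (b1 * y). split; auto. rewrite mC; auto. }
     replace (b1*(b*a0)) with (b*(a0*b1)) in hw by msolve. replace ((b*b0)*a1) with (b*(b0*a1)) in hw by msolve.
     apply distr in hw. destruct hw as [w' [hw' ->]].
     exists (cls o S w' (b0*b1)). assert (hadd (loc_ops o S) (cls o S a0 b0) (cls o S a1 b1) (cls o S w' (b0*b1))).
     { apply add_cls; eauto. } split. refine (HBa _ _ _ _ _ _ H); [assumption|assumption|apply isfrac; auto]. split; auto.
     apply add_cls; auto. exists z. split. replace (a*(b0*b1)) with (b1*(a*b0)) by msolve; auto.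
     apply cls_eq; auto. msolve.
   - intros [D [hD [h1 h2]]]. apply add_cls in h1; auto. destruct h1 as [w [hw ->]].
     apply add_cls in h2; auto. destruct h2 as [z [hz ->]].
     assert (hf := distr1 b _ _ _ hw).
     assert (exists d, add (a*(b0*b1)) (b*(a0*b1)) d /\ add d (b*(b0*a1)) z) as [d0 [hd hz2]].
     { apply add_assoc. exists (b * w). split; auto. }
     replace (a*(b0*b1)) with (b1*(a*b0)) in hd by msolve. replace (b*(a0*b1)) with (b1*(b*a0)) in hd by msolve.
     apply distr in hd. destruct hd as [y [hy ->]].
     exists (cls o S y (b*b0)). assert (hadd (loc_ops o S) (cls o S a b) (cls o S a0 b0) (cls o S y (b*b0))).
     { apply add_cls; eauto. } split. refine (HBa _ _ _ _ _ _ H); [assumption|assumption|apply isfrac; auto]. split; auto.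
     apply add_cls; auto. exists z. split. replace (y*b1) with (b1*y) by msolve.
     replace (b*b0*a1) with (b*(b0*a1)) by msolve; auto.
     apply cls_eq; auto. msolve. }
 split. { intros; apply lzero; auto. }
 split. { intros Z hZ hP. assert (h := proj2 (hP _ _ HB0 HB0) eq_refl).
   apply lcomm in h; auto. apply lzero in h; auto. }
 split. { intros X hX. frc hX. exists (cls o S (neg a) b).
   assert (h := lneg_ex a b hb). split. eapply HBn; eauto. split; auto.
   intros Y hY h'. apply lneg_uniq; auto. }
 split. { intros X Y Z Y' hX hY hZ hY' hn. frc hY. assert (hY'e := lneg_uniq _ _ _ hb hY' hn). subst Y'.
   frc hX. frc hZ. rewrite !add_cls by auto. rename a into y, b into t, a0 into x, b0 into s, a1 into z, b1 into u.
   split.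
   - intros [w [hw e]]. apply cls_eq in e; auto.
     apply (distr1 s) in hw. replace (s*w) with (u*(x*t)) in hw by (transitivity (w * s); [rewrite <- e; msolve|msolve]).
     apply rev in hw. replace (neg (s*(y*u))) with (u * (s * neg y)) in hw by (rewrite !mul_neg; f_equal; msolve).
     apply distr in hw. destruct hw as [v [hv e2]].
     exists v. split; auto. apply cls_eq; auto. transitivity (s*(t*z)). msolve. rewrite e2; msolve.
   - intros [v [hv e]]. apply cls_eq in e; auto.
     apply (distr1 u) in hv. replace (u*v) with (s*(t*z)) in hv by (transitivity (v*u); [rewrite <- e; msolve| msolve]).
     replace (u * (s * neg y)) with (neg (s*(y*u))) in hv by (rewrite !mul_neg; f_equal; msolve).
     replace (u*(x*t)) with (x*(t*u)) in hv by msolve.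
     apply rev in hv.
     apply distr in hv. destruct hv as [w [hw e2]].
     exists w. split; auto. apply cls_eq; auto. rewrite e2; msolve. }
 split. { intros X Y Z hX hY hZ. frc hX. frc hY. frc hZ. rewrite !mul_cls by auto. apply cls_eq; auto; msolve. }
 split. { intros X Y hX hY. frc hX. frc hY. rewrite !mul_cls by auto. apply cls_eq; auto; msolve. }
 split. { intros X hX. frc hX. simpl hone. rewrite !mul_cls by auto. apply cls_eq; auto; msolve. }
 split. { intros X Y Z C hX hY hZ hC. frc hX. frc hY. frc hZ. rewrite !mul_cls by auto.
   rename a into x, b into s, a0 into y, b0 into t, a1 into z, b1 into u. rewrite add_cls by auto. split.
   - intros [W [hW [h1 ->]]]. apply add_cls in h1; auto. destruct h1 as [w [hw ->]].
     rewrite mul_cls by auto. exists ((x*s)*w). split.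
     replace (x*y*(s*u)) with ((x*s)*(y*u)) by msolve. replace (s*t*(x*z)) with ((x*s)*(t*z)) by msolve.
     apply distr1; auto. apply cls_eq; auto. msolve.
   - intros [v [hv ->]]. replace (x*y*(s*u)) with ((x*s)*(y*u)) in hv by msolve.
     replace (s*t*(x*z)) with ((x*s)*(t*z)) in hv by msolve. apply distr in hv. destruct hv as [w [hw ->]].
     exists (cls o S w (t*u)). assert (hadd (loc_ops o S) (cls o S y t) (cls o S z u) (cls o S w (t*u))).
     { apply add_cls; eauto. } split. refine (HBa _ _ _ _ _ _ H); [assumption|assumption|apply isfrac; auto]. split; auto.
     rewrite mul_cls by auto. apply cls_eq; auto. msolve. }
 split. { intros X hX. frc hX. simpl hzero. rewrite mul_cls by auto. apply cls_eq; auto. rewrite !m0; auto. }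
 { simpl. intro e. apply cls_eq in e; auto. rewrite !m1r in e. apply n01; auto. }
Qed.
End LocB.

Lemma goodSnz : goodS (Snz o).
Proof. unfold goodS, Snz. split. intro h; apply n01; auto. split; auto. intros; apply mnz; auto. Qed.

Lemma frac_mul S (HS : goodS S) C D : is_frac o S C -> is_frac o S D -> is_frac o S (hmul (loc_ops o S) C D).
Proof. intros [a [b [hb ->]]] [c [d [hd ->]]]. rewrite mul_cls by auto. exists (a*c), (b*d). split; auto. apply HS; auto. Qed.

Lemma loc_hyperring_full S (HS : goodS S) : is_hyperring (loc_ops o S) (is_frac o S).
Proof. apply loc_hyperring; auto.
 - exists z0, o1; split; auto; apply HS.
 - exists o1, o1; split; auto; apply HS.
 - apply frac_mul; auto. Qed.

Lemma hid0 I : is_hideal o I -> I z0.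
Proof. intros [[a ha] hc]. apply (hc a a o1 (neg a) z0); auto. rewrite m1; apply negP. apply negP. Qed.

Lemma hidm I x r : is_hideal o I -> I x -> I (r * x).
Proof. intros hI hx. destruct hI as [hne hc]. apply (hc z0 x (neg r) (r*x) (r*x)); auto.
 apply hid0; split; auto. rewrite neg_mul. apply addC, negP. apply add0l; auto. Qed.

Lemma prime0 (p : spec o) : proj1_sig p z0.
Proof. apply hid0. exact (proj1 (proj2_sig p)). Qed.

Lemma prime_mul (p : spec o) a b : ~ proj1_sig p a -> ~ proj1_sig p b -> ~ proj1_sig p (a * b).
Proof. intros ha hb h; destruct (proj2 (proj2 (proj2_sig p)) _ _ h); auto. Qed.

Lemma prime1 (p : spec o) : ~ proj1_sig p o1.
Proof. destruct (proj1 (proj2 (proj2_sig p))) as [x hx]. intro h. apply hx. rewrite <- (m1r x). apply hidm; auto. exact (proj1 (proj2_sig p)). Qed.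

Lemma prime_nz (p : spec o) a : ~ proj1_sig p a -> a <> z0.
Proof. intros h e; subst; apply h, prime0. Qed.

Lemma goodSprime (p : spec o) : goodS (Sprime o p).
Proof. unfold goodS, Sprime. split. apply prime1. split. intros; apply prime_mul; auto. apply prime_nz. Qed.

Definition pI (g : R) : R -> Prop := fun x => exists r, x = r * g.

Lemma pI_hideal g : is_hideal o (pI g).
Proof. split. exists g, o1; rewrite m1; auto.
 intros a b r n c [r1 ->] [r2 ->] hn hc. apply neg_uniq in hn. subst n.
 replace (neg (r * (r2 * g))) with (g * neg (r*r2)) in hc by (rewrite mul_neg; f_equal; msolve).
 replace (r1 * g) with (g * r1) in hc by msolve. apply distr in hc. destruct hc as [w [_ ->]].
 exists w; apply mC. Qed.

Lemma zopen_D g : zopen o (Dset o g).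
Proof. exists (pI g). split. apply pI_hideal. intro p. unfold Dset, Vset. split.
 - intros h hV. apply h, hV. exists o1; rewrite m1; auto.
 - intros h hg. apply h. intros x [r ->]. apply hidm; auto. exact (proj1 (proj2_sig p)). Qed.

Lemma eta_prime : is_prime o (fun x => x = z0).
Proof. split. split. exists z0; auto.
 intros a b r n c -> -> hn hc. rewrite m0r in hn. apply add0l in hn. subst. apply add0l in hc; auto.
 split. exists o1. intro e; apply n01; auto.
 intros a b h. apply dom; auto. Qed.

Definition eta : spec o := exist _ (fun x => x = z0) eta_prime.

Lemma zopen_eta V q : zopen o V -> V q -> V eta.
Proof. intros [I [hI hV]] hq. apply hV in hq. apply hV. intro h. apply hq. intros x hx.
 apply NNPP. intro hx'. apply (prime_nz q) in hx'. apply hx'. apply (h x hx). Qed.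

Lemma zopen_basis U q : zopen o U -> U q -> exists g, ~ proj1_sig q g /\ forall p, Dset o g p -> U p.
Proof. intros [I [hI hV]] hq. apply hV in hq. unfold Vset in hq.
 apply not_all_ex_not in hq. destruct hq as [x hx]. exists x. split. intro h; apply hx; auto.
 intros p hp. apply hV. intro h. apply hp, h. apply NNPP; intro; apply hx; intro; contradiction. Qed.

Lemma hpow_add f n m : hpow o f (n + m) = hpow o f n * hpow o f m.
Proof. induction n; simpl. rewrite m1; auto. rewrite IHn, mA; auto. Qed.

Lemma hpow_nz f n : f <> z0 -> hpow o f n <> z0.
Proof. intro h; induction n; simpl. intro e; apply n01; auto. apply mnz; auto. Qed.

Lemma hpow_prime (p : spec o) f n : ~ proj1_sig p f -> ~ proj1_sig p (hpow o f n).
Proof. intro h; induction n; simpl. apply prime1. apply prime_mul; auto. Qed.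

Lemma hpow1 n : hpow o o1 n = o1.
Proof. induction n; simpl; auto. rewrite IHn, m1; auto. Qed.

Lemma goodSpow f : f <> z0 -> goodS (Spow o f).
Proof. intro hf. split. exists 0; auto. split. intros a b [n ->] [m ->]. exists (n+m); rewrite hpow_add; auto.
 intros a [n ->]. apply hpow_nz; auto. Qed.

Lemma cls_restr S (HS : goodS S) a b : S b ->
  cls o S a b = fun pr => cls o (Snz o) a b pr /\ S (snd pr).
Proof. intro hb. assert (hb' : Snz o b) by (apply HS; auto).
 apply functional_extensionality; intros [r s]. apply propositional_extensionality.
 rewrite (cls_mem S HS), (cls_mem (Snz o) goodSnz) by auto. simpl. split.
 - intros [hs e]; repeat split; auto. apply HS; auto.
 - intros [[_ e] hs]; auto. Qed.

Definition Phi (U : spec o -> Prop) (u : R * R -> Prop) : secT o U :=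
  fun q pr => u pr /\ Sprime o (proj1_sig q) (snd pr).
Definition Psi (U : spec o -> Prop) (s : secT o U) : R * R -> Prop := fun pr => exists q, s q pr.

Lemma Phi_cls U u a b (q : {p : spec o | U p}) : u = cls o (Snz o) a b -> ~ proj1_sig (proj1_sig q) b ->
  Phi U u q = cls o (Sprime o (proj1_sig q)) a b.
Proof. intros -> hb. rewrite (cls_restr _ (goodSprime _) a b hb). reflexivity. Qed.

Lemma Yfrac U u : Yset o U u -> is_frac o (Snz o) u.
Proof. intros [h _]; auto. Qed.

Lemma frac_snd u pr : is_frac o (Snz o) u -> u pr -> snd pr <> z0.
Proof. intros [a [b [hb ->]]] h. destruct pr as [r s]. apply cls_mem in h; auto. apply h. apply goodSnz. Qed.

Lemma frac_in u pr : is_frac o (Snz o) u -> u pr -> u = cls o (Snz o) (fst pr) (snd pr).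
Proof. intros [a [b [hb ->]]] h. destruct pr as [r s]. apply cls_in; auto. apply goodSnz. Qed.

Section OU.
Variable U : spec o -> Prop.
Hypothesis hU : zopen o U.
Hypothesis hUe : U eta.
Let qe : {p : spec o | U p} := exist _ eta hUe.

Lemma Phi_eta u : is_frac o (Snz o) u -> Phi U u qe = u.
Proof using HD hU hUe. intro hu. apply functional_extensionality; intro pr. apply propositional_extensionality.
 unfold Phi; simpl. unfold Sprime; simpl. split. tauto. intro h; split; auto. apply (frac_snd u pr); auto. Qed.

Lemma Psi_Phi u : is_frac o (Snz o) u -> Psi U (Phi U u) = u.
Proof using HD hU hUe. intro hu. apply functional_extensionality; intro pr. apply propositional_extensionality.
 split. intros [q [h _]]; auto. intro h. exists qe. rewrite Phi_eta; auto. Qed.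

Lemma Phi_section u : Yset o U u -> is_section o U (Phi U u).
Proof using HD hU hUe. intros [hf hY]. split.
 - intro q. destruct (hY (proj1_sig q) (proj2_sig q)) as [a [b [hb e]]]. exists a, b. split. apply hb.
   apply Phi_cls; auto.
 - intro q. destruct (hY (proj1_sig q) (proj2_sig q)) as [a [b [hb e]]].
   destruct (zopen_basis U (proj1_sig q) hU (proj2_sig q)) as [x [hx hxU]].
   exists (Dset o (b * x)). split. apply zopen_D. split. apply prime_mul; auto.
   split. { intros p hp. apply hxU. intro h; apply hp. apply hidm; [exact (proj1 (proj2_sig p))| exact h]. }
   exists a, b. intros q' hq'. assert (~ proj1_sig (proj1_sig q') b).
   { intro h; apply hq'. rewrite mC. apply hidm; [exact (proj1 (proj2_sig (proj1_sig q')))| exact h]. }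
   split; auto. apply Phi_cls; auto. Qed.

Lemma section_char s : is_section o U s -> Yset o U (Psi U s) /\ s = Phi U (Psi U s).
Proof using HD hU hUe. intros [hf hl].
 assert (key : forall q : {p : spec o | U p}, exists a f, ~ proj1_sig (proj1_sig q) f /\
     s qe = cls o (Snz o) a f /\ s q = cls o (Sprime o (proj1_sig q)) a f).
 { intro q. destruct (hl q) as [V [hV [hVq [hVU [a [f hf']]]]]]. exists a, f.
   destruct (hf' q hVq) as [h1 h2]. split; auto. split; auto.
   destruct (hf' qe (zopen_eta V _ hV hVq)) as [_ h3]. exact h3. }
 assert (hfe : is_frac o (Snz o) (s qe)).
 { destruct (key qe) as [a [f [h1 [h2 _]]]]. exists a, f. split; [apply prime_nz in h1; exact h1| exact h2]. }
 assert (E : s = Phi U (s qe)).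
 { apply functional_extensionality; intro q. destruct (key q) as [a [f [h1 [h2 h3]]]].
   rewrite h3. symmetry; apply Phi_cls; auto. }
 assert (E2 : Psi U s = s qe). { rewrite E at 1. apply Psi_Phi; auto. }
 rewrite E2. split; auto. split; auto. intros p hp.
 destruct (key (exist _ p hp)) as [a [f [h1 [h2 _]]]]. exists a, f; auto. Qed.

Lemma Phi_mul u v : Yset o U u -> Yset o U v ->
  hmul (sec_ops o U) (Phi U u) (Phi U v) = Phi U (hmul (loc_ops o (Snz o)) u v).
Proof using HD hU hUe. intros [hfu hu] [hfv hv]. apply functional_extensionality; intro q.
 change (hmul (loc_ops o (Sprime o (proj1_sig q))) (Phi U u q) (Phi U v q) = Phi U (hmul (loc_ops o (Snz o)) u v) q).
 destruct (hu _ (proj2_sig q)) as [a [b [hb eu]]]. destruct (hv _ (proj2_sig q)) as [c [d [hd ev]]].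
 rewrite (Phi_cls U u a b q eu hb), (Phi_cls U v c d q ev hd). rewrite mul_cls by (auto; apply goodSprime).
 symmetry. apply Phi_cls. rewrite eu, ev. apply mul_cls; try apply goodSnz; apply prime_nz in hb; apply prime_nz in hd; auto.
 apply prime_mul; auto. Qed.

Lemma Phi_add u v w : Yset o U u -> Yset o U v -> Yset o U w ->
  (hadd (loc_ops o (Snz o)) u v w <-> hadd (sec_ops o U) (Phi U u) (Phi U v) (Phi U w)).
Proof using HD hU hUe. intros [hfu hu] [hfv hv] [hfw hw]. split.
 - intros h q. change (hadd (loc_ops o (Sprime o (proj1_sig q))) (Phi U u q) (Phi U v q) (Phi U w q)). destruct (hu _ (proj2_sig q)) as [a [b [hb eu]]]. destruct (hv _ (proj2_sig q)) as [c [d [hd ev]]].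
   rewrite (Phi_cls U u a b q eu hb), (Phi_cls U v c d q ev hd).
   assert (hb' := prime_nz _ _ hb). assert (hd' := prime_nz _ _ hd).
   rewrite eu, ev in h. apply add_cls in h; try apply goodSnz; auto. destruct h as [y [hy ew]].
   rewrite (Phi_cls U w y (b*d) q ew (prime_mul _ _ _ hb hd)).
   apply add_cls; auto. apply goodSprime. eauto.
 - intro h. specialize (h qe). change (hadd (loc_ops o (Snz o)) (Phi U u qe) (Phi U v qe) (Phi U w qe)) in h. rewrite !Phi_eta in h; auto. Qed.

Lemma Y0 : Yset o U (cls o (Snz o) z0 o1).
Proof using HD hU hUe. split. exists z0, o1. split; [apply (proj1 goodSnz) | reflexivity]. intros p _. exists z0, o1. split; [apply prime1 | reflexivity]. Qed.
Lemma Y1 : Yset o U (cls o (Snz o) o1 o1).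
Proof using HD hU hUe. split. exists o1, o1. split; [apply (proj1 goodSnz) | reflexivity]. intros p _. exists o1, o1. split; [apply prime1 | reflexivity]. Qed.

Lemma Ymul u v : Yset o U u -> Yset o U v -> Yset o U (hmul (loc_ops o (Snz o)) u v).
Proof using HD hU hUe. intros [hfu hu] [hfv hv]. split. apply frac_mul; auto. apply goodSnz.
 intros p hp. destruct (hu _ hp) as [a [b [hb ->]]]. destruct (hv _ hp) as [c [d [hd ->]]].
 exists (a*c), (b*d). split. apply prime_mul; auto. apply mul_cls; apply prime_nz in hb; apply prime_nz in hd; auto.
 apply goodSnz. Qed.

Lemma Yadd u v w : Yset o U u -> Yset o U v -> is_frac o (Snz o) w -> hadd (loc_ops o (Snz o)) u v w -> Yset o U w.
Proof using HD hU hUe. intros [hfu hu] [hfv hv] hw h. split; auto.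
 intros p hp. destruct (hu _ hp) as [a [b [hb ->]]]. destruct (hv _ hp) as [c [d [hd ->]]].
 apply (proj1 (add_cls (Snz o) goodSnz a b c d _ (prime_nz _ _ hb) (prime_nz _ _ hd))) in h. destruct h as [y [_ ->]].
 exists y, (b*d). split; [apply prime_mul; auto | reflexivity]. Qed.

Lemma Yneg u v : Yset o U u -> is_frac o (Snz o) v -> hadd (loc_ops o (Snz o)) u v (hzero (loc_ops o (Snz o))) -> Yset o U v.
Proof using HD hU hUe. intros [hfu hu] hv h. split; auto.
 intros p hp. destruct (hu _ hp) as [a [b [hb ->]]].
 assert (e := lneg_uniq (Snz o) goodSnz (is_frac o (Snz o)) (fun C h => h) a b v (prime_nz _ _ hb) hv h).
 exists (neg a), b; split; [exact hb | exact e]. Qed.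

Lemma Y_hyperring : is_hyperring (loc_ops o (Snz o)) (Yset o U).
Proof using HD hU hUe. apply loc_hyperring. apply goodSnz. apply Yfrac. apply Y0. apply Y1. apply Ymul. apply Yadd. apply Yneg. Qed.

Lemma Y_sub : is_sub_hyperring (loc_ops o (Snz o)) (is_frac o (Snz o)) (Yset o U).
Proof using HD hU hUe. split. exact (Yfrac U). split. apply Y0. split. apply Y1. split. apply Ymul.
 split. intros a b c ha hb hc h. exact (Yadd a b c ha hb hc h). split. intros a b ha hb h. exact (Yneg a b ha hb h). apply Y_hyperring. Qed.

Lemma sec_zero : hzero (sec_ops o U) = Phi U (cls o (Snz o) z0 o1).
Proof using HD hU hUe. apply functional_extensionality; intro q. simpl. symmetry. apply Phi_cls; auto. apply prime1. Qed.
Lemma sec_one : hone (sec_ops o U) = Phi U (cls o (Snz o) o1 o1).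
Proof using HD hU hUe. apply functional_extensionality; intro q. simpl. symmetry. apply Phi_cls; auto. apply prime1. Qed.

Lemma hom_Psi : is_hom (sec_ops o U) (is_section o U) (loc_ops o (Snz o)) (Yset o U) (Psi U).
Proof using HD hU hUe. split. intros s hs; apply section_char; auto. split.
 - intros s1 s2 s3 h1 h2 h3 h. destruct (section_char _ h1) as [y1 e1]. destruct (section_char _ h2) as [y2 e2].
   destruct (section_char _ h3) as [y3 e3]. apply Phi_add; auto. rewrite <- e1, <- e2, <- e3; auto.
 - intros s1 s2 h1 h2. destruct (section_char _ h1) as [y1 e1]. destruct (section_char _ h2) as [y2 e2].
   remember (Psi U s1) as u1. remember (Psi U s2) as u2. subst s1 s2.
   rewrite Phi_mul by auto. rewrite !Psi_Phi; auto; apply (Yfrac U); auto. apply Ymul; auto. Qed.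

Lemma hom_Phi : is_hom (loc_ops o (Snz o)) (Yset o U) (sec_ops o U) (is_section o U) (Phi U).
Proof using HD hU hUe. split. apply Phi_section. split.
 - intros; apply Phi_add; auto.
 - intros; symmetry; apply Phi_mul; auto. Qed.

Lemma sec_iso : hiso (sec_ops o U) (is_section o U) (loc_ops o (Snz o)) (Yset o U).
Proof using HD hU hUe. exists (Psi U), (Phi U). split. apply hom_Psi. split. apply hom_Phi. split.
 - intros s hs; symmetry; apply section_char; auto.
 - intros u hu; apply Psi_Phi, (Yfrac U); auto. Qed.

End OU.

Definition clo (A : R -> Prop) := forall a b t n c, A a -> A b -> add (t*b) n z0 -> add a n c -> A c.

Lemma hardH f u : f <> z0 -> is_frac o (Snz o) u ->
  (forall q : spec o, ~ proj1_sig q f -> exists a b, ~ proj1_sig q b /\ u = cls o (Snz o) a b) ->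
  exists a n, u = cls o (Snz o) a (hpow o f n).
Proof.
 intros hf [r [s [hs ->]]] H.
 set (J := fun b => exists c, b * r = c * s).
 destruct (classic (exists n, J (hpow o f n))) as [[n [c hc]] | hno].
 { exists c, n. apply cls_eq; [apply goodSnz|exact hs|apply hpow_nz; auto|]. rewrite mC; exact hc. }
 assert (hJ0 : J z0). { exists z0. rewrite !m0; auto. }
 assert (hJc : clo J).
 { intros a b t n c [c1 e1] [c2 e2] hn hc. apply neg_uniq in hn. subst n. apply (distr1 r) in hc.
   replace (r * a) with (s * c1) in hc by (transitivity (c1 * s); [msolve | rewrite <- e1; msolve]).
   replace (r * neg (t * b)) with (s * neg (t * c2)) in hc by
     (rewrite !mul_neg; f_equal; transitivity (t * (c2 * s)); [msolve | rewrite <- e2; msolve]).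
   apply distr in hc. destruct hc as [w [_ e]]. exists w. rewrite mC, e; apply mC. }
 set (P := fun A : R -> Prop => ((forall x, J x -> A x) \/ (forall x, ~ A x)) /\
             (forall n, ~ A (hpow o f n)) /\ clo A).
 assert (Hch : forall F : classical_sets.set (classical_sets.set R), classical_sets.subset F P ->
        classical_sets.total_on F classical_sets.subset ->
        P (classical_sets.bigcup F (fun X : classical_sets.set R => X))).
 { intros F hFP htot. unfold classical_sets.bigcup, classical_sets.mkset. split; [|split].
   - destruct (classic (exists X, F X /\ forall x, J x -> X x)) as [[X [hX hJX]]|hn].
     + left. intros x hx. exists X; auto.
     + right. intros x [X hX hx]. destruct (hFP X hX) as [[hJX|he] _].
       * apply hn; eauto.
       * apply (he x hx).
   - intros n [X hX hx]. destruct (hFP X hX) as [_ [hav _]]. apply (hav n hx).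
   - intros a b t n c [X1 h1 ha] [X2 h2 hb] hn hc. destruct (htot X1 X2 h1 h2) as [s12|s21].
     + exists X2; auto. apply (proj2 (proj2 (hFP X2 h2)) a b t n c); auto.
     + exists X1; auto. apply (proj2 (proj2 (hFP X1 h1)) a b t n c); auto. }
 destruct (@classical_sets.Zorn_bigcup R P Hch) as [A [[hJA [hav hclo]] hmax]].
 assert (hPJ : P J). { split. left; auto. split; auto. intros n hn; apply hno; eauto. }
 assert (JA : forall x, J x -> A x).
 { destruct hJA as [h|he]; auto. exfalso. apply (hmax J); auto. split.
   intros x hx; destruct (he x hx). intro h. apply (he z0), h, hJ0. }
 assert (hidA : is_hideal o A). { split; auto. exists z0; auto. }
 assert (Qlem : forall y, (exists x, A (x * y) /\ ~ A x) -> exists n, A (hpow o f n * y)).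
 { intros y [x [hx hnx]]. apply NNPP. intro hn.
   apply (hmax (fun x => A (x * y))).
   - split. intros z hz. rewrite mC. apply hidm; auto. intro h. apply hnx, h, hx.
   - split. left. intros z hz. rewrite mC. apply hidm; auto. split. intros n hA. apply hn; eauto.
     intros a b t n c ha hb hn' hc. apply (hclo (a*y) (b*y) t (n*y) (c*y)); auto.
     + apply (distr1 y) in hn'. rewrite m0r in hn'. replace (t*(b*y)) with (y*(t*b)) by msolve.
       replace (n*y) with (y*n) by msolve; auto.
     + apply (distr1 y) in hc. replace (a*y) with (y*a) by msolve. replace (n*y) with (y*n) by msolve.
       replace (c*y) with (y*c) by msolve; auto. }
 assert (hprime : is_prime o A).
 { split; auto. split. exists o1. apply (hav 0).
   intros a b hab. apply NNPP; intro hn. apply not_or_and in hn. destruct hn as [ha hb].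
   destruct (Qlem b (ex_intro _ a (conj hab ha))) as [n hn].
   destruct (Qlem (hpow o f n) (ex_intro _ b (conj (eq_ind _ A hn _ (mC _ _)) hb))) as [m hm].
   apply (hav (m + n)). rewrite hpow_add; auto. }
 assert (hfA : ~ A f) by (intro hfA; apply (hav 1); simpl; rewrite m1r; auto).
 destruct (H (exist _ A hprime) hfA) as [a [b [hb e]]].
 simpl in hb. exfalso. apply hb, JA. apply cls_eq in e; [|apply goodSnz|auto|apply (prime_nz (exist _ A hprime)); auto].
 exists a. transitivity (r*b). apply mC. exact e.
Qed.

Lemma sec_hyperring U : zopen o U -> U eta -> is_hyperring (sec_ops o U) (is_section o U).
Proof. intros hU hUe.
 assert (Hsd : forall s, is_section o U s -> s = Phi U (Psi U s)) by (intros; apply section_char; auto).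
 assert (HsY : forall s, is_section o U s -> Yset o U (Psi U s)) by (intros; apply section_char; auto).
 assert (h1 : forall a, Yset o U a -> is_section o U (Phi U a)) by (intros; exact (Phi_section U hU hUe _ H)).
 assert (h2 : forall a, is_section o U a -> Phi U (Psi U a) = a) by (intros; symmetry; apply Hsd; auto).
 assert (h3 : forall b, Yset o U b -> Psi U (Phi U b) = b) by (intros; exact (Psi_Phi U hU hUe _ (Yfrac U _ H))).
 assert (h4 : forall a b c, is_section o U a -> is_section o U b -> is_section o U c ->
   (hadd (sec_ops o U) a b c <-> hadd (loc_ops o (Snz o)) (Psi U a) (Psi U b) (Psi U c))).
 { intros a b c ha hb hc. rewrite (Hsd a ha) at 1. rewrite (Hsd b hb) at 1. rewrite (Hsd c hc) at 1.
   symmetry; apply (Phi_add U hU hUe); auto. }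
 assert (h5 : forall a b, is_section o U a -> is_section o U b ->
   Psi U (hmul (sec_ops o U) a b) = hmul (loc_ops o (Snz o)) (Psi U a) (Psi U b)).
 { intros a b ha hb. apply (proj2 (proj2 (hom_Psi U hU hUe))); auto. }
 assert (h6 : forall a b, is_section o U a -> is_section o U b -> is_section o U (hmul (sec_ops o U) a b)).
 { intros a b ha hb. assert (e := Phi_mul U hU hUe _ _ (HsY a ha) (HsY b hb)).
   rewrite <- (Hsd a ha), <- (Hsd b hb) in e. rewrite e.
   exact (Phi_section U hU hUe _ (Ymul U hU hUe _ _ (HsY a ha) (HsY b hb))). }
 assert (h7 : is_section o U (hzero (sec_ops o U))).
 { rewrite (sec_zero U hU hUe). exact (Phi_section U hU hUe _ (Y0 U hU hUe)). }
 assert (h8 : is_section o U (hone (sec_ops o U))).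
 { rewrite (sec_one U hU hUe). exact (Phi_section U hU hUe _ (Y1 U hU hUe)). }
 assert (h9 : Psi U (hzero (sec_ops o U)) = hzero (loc_ops o (Snz o))).
 { rewrite (sec_zero U hU hUe). exact (Psi_Phi U hU hUe _ (Yfrac U _ (Y0 U hU hUe))). }
 assert (h10 : Psi U (hone (sec_ops o U)) = hone (loc_ops o (Snz o))).
 { rewrite (sec_one U hU hUe). exact (Psi_Phi U hU hUe _ (Yfrac U _ (Y1 U hU hUe))). }
 exact (transport _ _ _ _ _ _ (Psi U) (Phi U) (Y_hyperring U hU hUe) HsY h1 h2 h3 h4 h5 h6 h7 h8 h9 h10).
Qed.

Lemma Ysub U W u : (forall p, W p -> U p) -> Yset o U u -> Yset o W u.
Proof. intros h [hf hY]. split; auto. Qed.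

Lemma Y_Rf f u : f <> z0 -> (Yset o (Dset o f) u <-> image_Rf o f u).
Proof. intro hf. split.
 - intros [hfr hY]. split; auto. destruct (hardH f u hf hfr) as [a [n e]].
   { intros q hq. apply hY; auto. }
   exists a, n. rewrite e. apply cls_self. apply goodSnz. apply hpow_nz; auto.
 - intros [hfr [a [n h]]]. split; auto. intros p hp. exists a, (hpow o f n). split.
   apply hpow_prime; auto. apply (frac_in u (a, hpow o f n)); auto. Qed.

Lemma Inter_Y U : zopen o U -> Inter_Rf o U = Yset o U.
Proof. intro hU. apply functional_extensionality; intro u. apply propositional_extensionality. split.
 - intros [hfr hI]. split; auto. intros p hp. destruct (zopen_basis U p hU hp) as [g [hg hgU]].
   destruct (hI g (prime_nz _ _ hg) hgU) as [_ [a [n h]]]. exists a, (hpow o g n). split.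
   apply hpow_prime; auto. apply (frac_in u (a, hpow o g n)); auto.
 - intros [hfr hY]. split; auto. intros f hf hfU. apply Y_Rf; auto. apply (Ysub U); auto. split; auto. Qed.

(* R_S as a subset of K *)
Definition BS (S : R -> Prop) : (R * R -> Prop) -> Prop :=
  fun u => is_frac o (Snz o) u /\ exists a b, S b /\ u = cls o (Snz o) a b.
Definition iotaS (C : R * R -> Prop) : R * R -> Prop := cls o (Snz o) (fst (rep o C)) (snd (rep o C)).
Definition rhoS (S : R -> Prop) (u : R * R -> Prop) : R * R -> Prop := fun pr => u pr /\ S (snd pr).

Lemma iota_cls S (HS : goodS S) a b : S b -> iotaS (cls o S a b) = cls o (Snz o) a b.
Proof. intro hb. assert (h := frac_rep S HS (cls o S a b) (ex_intro _ a (ex_intro _ b (conj hb eq_refl)))).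
 unfold iotaS. destruct (rep o (cls o S a b)) as [r s]. simpl. apply cls_mem in h; auto. destruct h as [hs e].
 assert (Sn : forall x, S x -> Snz o x) by (intros x hx; apply (proj2 (proj2 HS)); exact hx).
 apply (cls_eq (Snz o) goodSnz); [auto|auto|symmetry; exact e]. Qed.

Lemma RS_iso S (HS : goodS S) : hiso (loc_ops o (Snz o)) (BS S) (loc_ops o S) (is_frac o S).
Proof.
 assert (Sn : forall b, S b -> Snz o b) by (intros b0 hb0; apply (proj2 (proj2 HS)); exact hb0).
 assert (SM' : forall x y, S x -> S y -> S (x*y)) by (apply (proj1 (proj2 HS))).
 assert (S1' : S o1) by apply (proj1 HS).
 assert (rc : forall a b, S b -> rhoS S (cls o (Snz o) a b) = cls o S a b).
 { intros a b hb. symmetry. apply cls_restr; auto. }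
 exists (rhoS S), iotaS. split; [|split; [|split]].
 - split; [|split].
   + intros u [_ [a [b [hb ->]]]]. rewrite rc; auto. exists a, b; auto.
   + intros u v w [_ [a [b [hb ->]]]] [_ [c [d [hd ->]]]] [_ [e [g [hg ->]]]] h.
     apply add_cls in h; try apply goodSnz; auto. destruct h as [y [hy E]].
     rewrite E. rewrite !rc by auto. apply add_cls; eauto.
   + intros u v [_ [a [b [hb ->]]]] [_ [c [d [hd ->]]]]. rewrite !mul_cls by (try apply goodSnz; auto).
     rewrite !rc by (try apply Sn; auto). rewrite mul_cls; auto.
 - split; [|split].
   + intros C [a [b [hb ->]]]. rewrite iota_cls; auto. split. exists a, b; auto. exists a, b; auto.
   + intros C D E [a [b [hb ->]]] [c [d [hd ->]]] [e [g [hg ->]]] h.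
     apply add_cls in h; auto. destruct h as [y [hy E]]. rewrite E. rewrite !iota_cls by auto.
     apply add_cls; try apply goodSnz; eauto.
   + intros C D [a [b [hb ->]]] [c [d [hd ->]]]. rewrite mul_cls by auto. rewrite !iota_cls by (try apply Sn; auto).
     rewrite mul_cls; try apply goodSnz; auto.
 - intros u [_ [a [b [hb ->]]]]. rewrite rc, iota_cls; auto.
 - intros C [a [b [hb ->]]]. rewrite iota_cls, rc; auto. Qed.

Lemma image_BS f : f <> z0 -> image_Rf o f = BS (Spow o f).
Proof. intro hf. apply functional_extensionality; intro u. apply propositional_extensionality. split.
 - intros [hfr [a [n h]]]. split; auto. exists a, (hpow o f n). split. exists n; auto. apply (frac_in u (a, hpow o f n)); auto.
 - intros [hfr [a [b [[n ->] ->]]]]. split; auto. exists a, n. apply cls_self. apply goodSnz. apply hpow_nz; auto. Qed.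

Local Hint Resolve goodSnz goodSprime : core.

Lemma Yfull_R : hiso (loc_ops o (Snz o)) (Yset o (full (spec o))) o (full R).
Proof.
 set (lam := fun u : R * R -> Prop => epsilon (inhabits z0) (fun a => u (a, o1))).
 assert (hsnz1 : Snz o o1) by apply (proj1 goodSnz).
 assert (hY : forall u, Yset o (full (spec o)) u -> u = cls o (Snz o) (lam u) o1).
 { intros u [hfr hY]. destruct (hardH o1 u (fun e => n01 (eq_sym e)) hfr) as [a [n e]].
   { intros q _. apply hY. exact I. }
   rewrite hpow1 in e. assert (h : u (lam u, o1)).
   { unfold lam. apply epsilon_spec. exists a. rewrite e. apply (cls_self (Snz o) goodSnz); auto. }
   apply (frac_in u _ hfr h). }
 assert (hYc : forall a, Yset o (full (spec o)) (cls o (Snz o) a o1)).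
 { intro a. split. exists a, o1; auto. intros p _. exists a, o1. split; auto. apply prime1. }
 assert (hlam : forall a, lam (cls o (Snz o) a o1) = a).
 { intro a. assert (e := hY _ (hYc a)). apply cls_eq in e; auto. rewrite !m1r in e; auto. }
 exists lam, (fun a => cls o (Snz o) a o1). split; [|split; [|split]].
 - split; [intros; exact I|split].
   + intros u v w hu hv hw h. rewrite (hY u hu), (hY v hv), (hY w hw) in h.
     apply (add_cls (Snz o) goodSnz _ _ _ _ _ hsnz1 hsnz1) in h. destruct h as [y [hy e]].
     apply (cls_eq (Snz o) goodSnz _ _ _ _ hsnz1 (mnz _ _ hsnz1 hsnz1)) in e.
     rewrite !m1r, !m1 in *. rewrite e; auto.
   + intros u v hu hv. rewrite (hY u hu), (hY v hv) at 1. rewrite mul_cls by auto. rewrite m1.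
     rewrite hlam. rewrite (hY u hu) at 2. rewrite (hY v hv) at 2. rewrite !hlam. auto.
 - split; [intros; apply hYc|split].
   + intros a b c _ _ _ h. apply (add_cls (Snz o) goodSnz _ _ _ _ _ hsnz1 hsnz1). exists c. rewrite m1r, m1. split; auto.
     apply (cls_eq (Snz o) goodSnz _ _ _ _ hsnz1 (mnz _ _ hsnz1 hsnz1)). rewrite m1, !m1r; auto.
   + intros a b _ _. rewrite mul_cls by auto. rewrite m1; auto.
 - intros u hu. symmetry; apply hY; auto.
 - intros a _; apply hlam. Qed.

Lemma Dmul_l (q : spec o) a b : Dset o (a * b) q -> Dset o a q.
Proof. intros h ha. apply h. rewrite mC. apply hidm; auto. exact (proj1 (proj2_sig q)). Qed.
Lemma Dmul_r (q : spec o) a b : Dset o (a * b) q -> Dset o b q.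
Proof. intros h hb. apply h. apply hidm; auto. exact (proj1 (proj2_sig q)). Qed.

Lemma sec_proj U (hU : zopen o U) (hUe : U eta) s : is_section o U s ->
  forall q q' : {x : spec o | U x}, proj1_sig q = proj1_sig q' -> s q = s q'.
Proof. intros hs q q' e. destruct (section_char U hU hUe s hs) as [_ E]. rewrite E. unfold Phi. rewrite e. reflexivity. Qed.

Lemma sec_mulc U (hU : zopen o U) (hUe : U eta) s t : is_section o U s -> is_section o U t ->
  is_section o U (hmul (sec_ops o U) s t).
Proof. intros hs ht. exact (proj1 (proj2 (proj2 (sec_hyperring U hU hUe))) s t hs ht). Qed.

Section Stalk.
Variable p : spec o.

Definition phiS (U : spec o -> Prop) (s : secT o U) : R * R -> Prop :=
  fun pr => exists q : {x : spec o | U x}, proj1_sig q = p /\ s q pr.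

Lemma phiS_eq U (hU : zopen o U) (hp : U p) s : is_section o U s -> phiS U s = s (exist _ p hp).
Proof. intro hs. assert (hUe := zopen_eta U p hU hp).
 apply functional_extensionality; intro pr. apply propositional_extensionality. split.
 - intros [q [e h]]. rewrite (sec_proj U hU hUe s hs q (exist _ p hp) e) in h; auto.
 - intro h. exists (exist _ p hp). auto. Qed.

Lemma nbhd_D b : ~ proj1_sig p b -> nbhd o p (Dset o b).
Proof. intro hb. split. apply zopen_D. exact hb. Qed.

Lemma Y_D a b : b <> z0 -> Yset o (Dset o b) (cls o (Snz o) a b).
Proof. intro hb. split. exists a, b. split; auto. intros q hq. exists a, b. split; auto. Qed.

Lemma phiS_cocone : is_cocone o p (R * R -> Prop) (loc_ops o (Sprime o p)) (is_frac o (Sprime o p)) phiS.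
Proof. split.
 - intros U [hU hp]. assert (hUe := zopen_eta U p hU hp). split; [|split].
   + intros s hs. rewrite (phiS_eq U hU hp s hs). exact (proj1 hs (exist _ p hp)).
   + intros s1 s2 s3 h1 h2 h3 h. rewrite (phiS_eq U hU hp s1 h1), (phiS_eq U hU hp s2 h2), (phiS_eq U hU hp s3 h3).
     exact (h (exist _ p hp)).
   + intros s t hs ht. rewrite (phiS_eq U hU hp _ (sec_mulc U hU hUe s t hs ht)), (phiS_eq U hU hp s hs), (phiS_eq U hU hp t ht).
     reflexivity.
 - intros U V HVU [hU hp] [hV hpV] s hs. assert (hUe := zopen_eta U p hU hp).
   rewrite (phiS_eq U hU hp s hs). apply functional_extensionality; intro pr. apply propositional_extensionality. split.
   + intro h. exists (exist _ p hpV). split; auto. unfold restr. simpl.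
     rewrite (sec_proj U hU hUe s hs _ (exist _ p hp)); auto.
   + intros [q [e h]]. unfold restr in h. rewrite (sec_proj U hU hUe s hs _ (exist _ p hp)) in h; auto. Qed.

Lemma p2K a1 b1 a2 b2 a3 b3 : ~ proj1_sig p b1 -> ~ proj1_sig p b2 -> ~ proj1_sig p b3 ->
  hadd (loc_ops o (Sprime o p)) (cls o (Sprime o p) a1 b1) (cls o (Sprime o p) a2 b2) (cls o (Sprime o p) a3 b3) ->
  hadd (loc_ops o (Snz o)) (cls o (Snz o) a1 b1) (cls o (Snz o) a2 b2) (cls o (Snz o) a3 b3).
Proof. intros h1 h2 h3 h. apply (add_cls (Sprime o p) (goodSprime p)) in h; auto. destruct h as [y [hy e]].
 apply (cls_eq (Sprime o p) (goodSprime p)) in e; auto. 2: apply prime_mul; auto.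
 apply (add_cls (Snz o) goodSnz); try apply prime_nz with p; auto. exists y. split; auto.
 apply (cls_eq (Snz o) goodSnz); try apply prime_nz with p; auto. apply prime_mul; auto. Qed.

Section Univ.
Variables (T' : Type) (oT : hops T') (AT : T' -> Prop) (psi : forall U, secT o U -> T').
Hypothesis hcoc : is_cocone o p T' oT AT psi.

Let hhom := proj1 hcoc.
Let hcomp := proj2 hcoc.

Lemma K2 U W (HWU : forall q, W q -> U q) u : nbhd o p U -> nbhd o p W -> Yset o U u ->
  psi U (Phi U u) = psi W (Phi W u).
Proof. intros hUn hWn hY. destruct hUn as [hU hp].
 rewrite (hcomp U W HWU (conj hU hp) hWn (Phi U u) (Phi_section U hU (zopen_eta U p hU hp) u hY)). reflexivity. Qed.

Lemma K3 U1 U2 u : nbhd o p U1 -> nbhd o p U2 -> Yset o U1 u -> Yset o U2 u ->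
  psi U1 (Phi U1 u) = psi U2 (Phi U2 u).
Proof. intros [hU1 hp1] [hU2 hp2] hY1 hY2.
 destruct (zopen_basis U1 p hU1 hp1) as [g1 [hg1 hgU1]]. destruct (zopen_basis U2 p hU2 hp2) as [g2 [hg2 hgU2]].
 assert (hW : nbhd o p (Dset o (g1 * g2))) by (apply nbhd_D, prime_mul; auto).
 assert (HW1 : forall q, Dset o (g1*g2) q -> U1 q) by (intros q hq; apply hgU1; eapply Dmul_l; eauto).
 assert (HW2 : forall q, Dset o (g1*g2) q -> U2 q) by (intros q hq; apply hgU2; eapply Dmul_r; eauto).
 rewrite (K2 U1 _ HW1 u (conj hU1 hp1) hW hY1), (K2 U2 _ HW2 u (conj hU2 hp2) hW hY2). reflexivity. Qed.

Definition hS (C : R * R -> Prop) : T' :=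
  psi (Dset o (snd (rep o C))) (Phi (Dset o (snd (rep o C))) (iotaS C)).

Lemma hS_eq C a b W : C = cls o (Sprime o p) a b -> ~ proj1_sig p b -> nbhd o p W ->
  Yset o W (cls o (Snz o) a b) -> hS C = psi W (Phi W (cls o (Snz o) a b)).
Proof. intros eC hb hW hY. unfold hS.
 assert (hf : is_frac o (Sprime o p) C) by (exists a, b; auto).
 destruct (frac_rep_eq _ (goodSprime p) C hf) as [e1 hb1].
 assert (ei : iotaS C = cls o (Snz o) a b) by (rewrite eC; apply (iota_cls _ (goodSprime p)); auto).
 assert (ei2 : iotaS C = cls o (Snz o) (fst (rep o C)) (snd (rep o C))) by reflexivity.
 rewrite <- ei. apply K3; auto. apply nbhd_D; auto. rewrite ei2. apply Y_D. apply (prime_nz p); auto.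
 rewrite ei; auto. Qed.

Lemma hS_factor : factors o p (R * R -> Prop) phiS T' psi hS.
Proof. intros U [hU hp] s hs. assert (hUe := zopen_eta U p hU hp).
 destruct (section_char U hU hUe s hs) as [hY E].
 destruct (proj2 hY p hp) as [a [b [hb eu]]].
 transitivity (psi U (Phi U (Psi U s))). { rewrite <- E. reflexivity. }
 assert (hph : phiS U s = cls o (Sprime o p) a b).
 { rewrite (phiS_eq U hU hp s hs). rewrite E. exact (Phi_cls U _ a b (exist _ p hp) eu hb). }
 rewrite hph. assert (hY' : Yset o U (cls o (Snz o) a b)) by (rewrite <- eu; exact hY).
 rewrite (hS_eq _ a b U eq_refl hb (conj hU hp) hY'). rewrite eu. reflexivity. Qed.

Lemma hS_hom : is_hom (loc_ops o (Sprime o p)) (is_frac o (Sprime o p)) oT AT hS.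
Proof. split; [|split].
 - intros C hC. destruct (frac_rep_eq _ (goodSprime p) C hC) as [e1 hb1].
   rewrite (hS_eq C _ _ _ e1 hb1 (nbhd_D _ hb1) (Y_D _ _ (prime_nz p _ hb1))).
   apply (hhom _ (nbhd_D _ hb1)). apply Phi_section. apply zopen_D. apply zopen_eta with p. apply zopen_D. exact hb1.
   apply Y_D, (prime_nz p); auto.
 - intros C1 C2 C3 h1 h2 h3 h.
   destruct (frac_rep_eq _ (goodSprime p) C1 h1) as [e1 hb1].
   destruct (frac_rep_eq _ (goodSprime p) C2 h2) as [e2 hb2].
   destruct (frac_rep_eq _ (goodSprime p) C3 h3) as [e3 hb3].
   set (b1 := snd (rep o C1)) in *. set (b2 := snd (rep o C2)) in *. set (b3 := snd (rep o C3)) in *.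
   set (a1 := fst (rep o C1)) in *. set (a2 := fst (rep o C2)) in *. set (a3 := fst (rep o C3)) in *.
   set (W := Dset o (b1 * (b2 * b3))).
   assert (hW : nbhd o p W) by (apply nbhd_D; repeat apply prime_mul; auto).
   assert (hWz : zopen o W) by apply zopen_D.
   assert (hWe : W eta) by (apply zopen_eta with p; auto; apply hW).
   assert (Y1' : Yset o W (cls o (Snz o) a1 b1)).
   { split. exists a1, b1; split; auto; apply (prime_nz p); auto. intros q hq. exists a1, b1. split; auto. eapply Dmul_l; eauto. }
   assert (Y2' : Yset o W (cls o (Snz o) a2 b2)).
   { split. exists a2, b2; split; auto; apply (prime_nz p); auto. intros q hq. exists a2, b2. split; auto.
     eapply Dmul_l. eapply Dmul_r. eauto. }
   assert (Y3' : Yset o W (cls o (Snz o) a3 b3)).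
   { split. exists a3, b3; split; auto; apply (prime_nz p); auto. intros q hq. exists a3, b3. split; auto.
     eapply Dmul_r. eapply Dmul_r. eauto. }
   rewrite (hS_eq C1 _ _ W e1 hb1 hW Y1'), (hS_eq C2 _ _ W e2 hb2 hW Y2'), (hS_eq C3 _ _ W e3 hb3 hW Y3').
   apply (hhom W hW); try (apply Phi_section; auto).
   apply (Phi_add W hWz hWe); auto. apply p2K; auto. rewrite <- e1, <- e2, <- e3; auto.
 - intros C1 C2 h1 h2.
   destruct (frac_rep_eq _ (goodSprime p) C1 h1) as [e1 hb1].
   destruct (frac_rep_eq _ (goodSprime p) C2 h2) as [e2 hb2].
   set (b1 := snd (rep o C1)) in *. set (b2 := snd (rep o C2)) in *.
   set (a1 := fst (rep o C1)) in *. set (a2 := fst (rep o C2)) in *.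
   set (W := Dset o (b1 * b2)).
   assert (hW : nbhd o p W) by (apply nbhd_D; repeat apply prime_mul; auto).
   assert (hWz : zopen o W) by apply zopen_D.
   assert (hWe : W eta) by (apply zopen_eta with p; auto; apply hW).
   assert (Y1' : Yset o W (cls o (Snz o) a1 b1)).
   { split. exists a1, b1; split; auto; apply (prime_nz p); auto. intros q hq. exists a1, b1. split; auto. eapply Dmul_l; eauto. }
   assert (Y2' : Yset o W (cls o (Snz o) a2 b2)).
   { split. exists a2, b2; split; auto; apply (prime_nz p); auto. intros q hq. exists a2, b2. split; auto. eapply Dmul_r; eauto. }
   assert (e12 : hmul (loc_ops o (Sprime o p)) C1 C2 = cls o (Sprime o p) (a1 * a2) (b1 * b2)).
   { rewrite e1, e2. apply (mul_cls _ (goodSprime p)); auto. }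
   assert (Y12 : Yset o W (cls o (Snz o) (a1 * a2) (b1 * b2))).
   { split. exists (a1*a2), (b1*b2). split; [apply (prime_nz p); apply prime_mul; auto | reflexivity].
     intros q hq. exists (a1*a2), (b1*b2). split; auto. }
   rewrite (hS_eq _ _ _ W e12 (prime_mul _ _ _ hb1 hb2) hW Y12).
   rewrite (hS_eq C1 _ _ W e1 hb1 hW Y1'), (hS_eq C2 _ _ W e2 hb2 hW Y2').
   rewrite <- (mul_cls (Snz o) goodSnz) by (apply (prime_nz p); auto).
   rewrite <- (Phi_mul W hWz hWe) by auto.
   apply (proj2 (proj2 (hhom W hW))); apply Phi_section; auto. Qed.

End Univ.

Lemma stalk_colim : is_stalk_colimit o p (loc_ops o (Sprime o p)) (is_frac o (Sprime o p)) phiS.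
Proof. split. apply loc_hyperring_full, goodSprime. split. apply phiS_cocone.
 intros T' oT AT psi _ hcoc. split.
 - exists (hS T' psi). split. exact (hS_hom T' oT AT psi hcoc). exact (hS_factor T' oT AT psi hcoc).
 - intros h1 h2 _ _ f1 f2 C hC.
   destruct (frac_rep_eq _ (goodSprime p) C hC) as [e1 hb1].
   set (b := snd (rep o C)) in *. set (a := fst (rep o C)) in *.
   assert (hn := nbhd_D _ hb1).
   assert (hs : is_section o (Dset o b) (Phi (Dset o b) (cls o (Snz o) a b))).
   { apply Phi_section. apply zopen_D. apply zopen_eta with p; auto. apply zopen_D. apply Y_D, (prime_nz p); auto. }
   assert (eC : phiS (Dset o b) (Phi (Dset o b) (cls o (Snz o) a b)) = C).
   { rewrite (phiS_eq _ (zopen_D b) hb1 _ hs). rewrite e1. apply Phi_cls; auto. }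
   rewrite <- eC. rewrite <- (f1 _ hn _ hs), <- (f2 _ hn _ hs). reflexivity. Qed.

End Stalk.

Lemma hiso_id T (p1 : hops T) A : hiso p1 A p1 A.
Proof. exists (fun x => x), (fun x => x). assert (h : is_hom p1 A p1 A (fun x => x)).
 { split; auto. } split; auto. Qed.

Lemma zopen_full : zopen o (full (spec o)).
Proof. exists (pI o1). split. apply pI_hideal. intro p. split; intros _. intro hv. apply (prime1 p). apply hv.
 exists o1. rewrite m1; auto. exact I. Qed.

Lemma main_body :
  ((forall f : R, f <> hzero o ->
      is_hyperring (sec_ops o (Dset o f)) (is_section o (Dset o f)) /\
      hiso (sec_ops o (Dset o f)) (is_section o (Dset o f))
           (loc_ops o (Spow o f)) (is_frac o (Spow o f))) /\
   hiso (sec_ops o (full (spec o))) (is_section o (full (spec o))) o (full R)) /\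
  (forall U : spec o -> Prop, zopen o U -> (exists p, U p) ->
      is_hyperring (sec_ops o U) (is_section o U) /\
      is_sub_hyperring (loc_ops o (Snz o)) (is_frac o (Snz o)) (Yset o U) /\
      hiso (sec_ops o U) (is_section o U) (loc_ops o (Snz o)) (Yset o U) /\
      is_sub_hyperring (loc_ops o (Snz o)) (is_frac o (Snz o)) (Inter_Rf o U) /\
      hiso (sec_ops o U) (is_section o U) (loc_ops o (Snz o)) (Inter_Rf o U)) /\
  (forall p : spec o,
      exists (L : Type) (oL : hops L) (AL : L -> Prop) (phi : forall U, secT o U -> L),
        is_stalk_colimit o p oL AL phi /\
        hiso oL AL (loc_ops o (Sprime o p)) (is_frac o (Sprime o p))).
Proof.
 split; [split|split].
 - intros f hf. assert (hU := zopen_D f). assert (hUe : Dset o f eta) by exact hf.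
   split. apply sec_hyperring; auto.
   assert (E : Yset o (Dset o f) = BS (Spow o f)).
   { rewrite <- image_BS by auto. apply functional_extensionality; intro u. apply propositional_extensionality.
     apply Y_Rf; auto. }
   eapply hiso_trans. apply (sec_iso _ hU hUe). rewrite E. apply RS_iso, goodSpow; auto.
 - assert (hU := zopen_full). assert (hUe : full (spec o) eta) by exact I.
   eapply hiso_trans. apply (sec_iso _ hU hUe). apply Yfull_R.
 - intros U hU [q hq]. assert (hUe := zopen_eta U q hU hq).
   split. apply sec_hyperring; auto. split. apply (Y_sub U hU hUe). split. apply (sec_iso U hU hUe).
   rewrite (Inter_Y U hU). split. apply (Y_sub U hU hUe). apply (sec_iso U hU hUe).
 - intro p. exists (R * R -> Prop), (loc_ops o (Sprime o p)), (is_frac o (Sprime o p)), (phiS p).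
   split. apply stalk_colim. apply hiso_id.
Qed.

End Alg.

Theorem theorem4p23 (R : Type) (o : hops R) :
  is_hyperdomain o (full R) ->
  (* (1) *)
  ((forall f : R, f <> hzero o ->
      is_hyperring (sec_ops o (Dset o f)) (is_section o (Dset o f)) /\
      hiso (sec_ops o (Dset o f)) (is_section o (Dset o f))
           (loc_ops o (Spow o f)) (is_frac o (Spow o f))) /\
   hiso (sec_ops o (full (spec o))) (is_section o (full (spec o))) o (full R)) /\
  (* (2) *)
  (forall U : spec o -> Prop, zopen o U -> (exists p, U p) ->
      is_hyperring (sec_ops o U) (is_section o U) /\
      is_sub_hyperring (loc_ops o (Snz o)) (is_frac o (Snz o)) (Yset o U) /\
      hiso (sec_ops o U) (is_section o U) (loc_ops o (Snz o)) (Yset o U) /\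
      is_sub_hyperring (loc_ops o (Snz o)) (is_frac o (Snz o)) (Inter_Rf o U) /\
      hiso (sec_ops o U) (is_section o U) (loc_ops o (Snz o)) (Inter_Rf o U)) /\
  (* (3) *)
  (forall p : spec o,
      exists (L : Type) (oL : hops L) (AL : L -> Prop) (phi : forall U, secT o U -> L),
        is_stalk_colimit o p oL AL phi /\
        hiso oL AL (loc_ops o (Sprime o p)) (is_frac o (Sprime o p))).
Proof. intro HD. exact (main_body R o HD). Qed.
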